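(* Let $n,r\geq 1$ be integers and let $h\colon \mathbb{Z}\to\mathbb{Z}$ be the Hilbert function of $S/I$, where $I\subseteq S$ is a saturated homogeneous ideal defining a zero-dimensional closed subscheme of $\mathbb{P}^n$ of length $r$. Define $e=\min\{a\in\mathbb{Z}\mid h(a)=r\}$ and let $[I_0]\in\operatorname{Hilb}^h_{S}$ be a closed point. If $[I_0]\in\operatorname{Slip}_{h,n}$, then $H_{S/I_0^k}(d)\geq r\cdot\dim_\Bbbk S_{k-1}$ for every positive integer $k$ and every integer $d\geq ke+k$.
   Context: $\Bbbk$ is an algebraically closed field (arbitrary characteristic), $S=\Bbbk[\alpha_0,\ldots,\alpha_n]$ with the standard $\mathbb{Z}$-grading, $\mathfrak{m}=(\alpha_0,\ldots,\alpha_n)$. For a graded module $M$, $H_M(d)=\dim_\Bbbk M_d$. For a function $h\colon\mathbb{Z}\to\mathbb{Z}$, $\operatorname{Hilb}^h_S$ denotes the multigraded Hilbert scheme (in the sense of Haiman–Sturmfels) parametrizing homogeneous ideals $I\subseteq S$ with $H_{S/I}=h$; its closed points are such ideals, written $[I]$. $\operatorname{Sip}_{h,n}$ is the set of closed points $[I]$ of $\operatorname{Hilb}^h_S$ such that $I$ is the saturated (radical) homogeneous ideal of a set of $r$ distinct points of $\mathbb{P}^n$, and $\operatorname{Slip}_{h,n}$ is its closure in $\operatorname{Hilb}^h_S$. *)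

(* Defs.v *)
From HB Require Import structures.
From mathcomp Require Import all_boot all_order all_algebra.
From mathcomp Require Import mpoly.
Set Implicit Arguments. Unset Strict Implicit. Unset Printing Implicit Defensive.
Import Order.TTheory GRing.Theory Num.Theory.
Local Open Scope ring_scope.

Section Defs.
Variables (K : fieldType) (nv : nat).
(* nv = n+1 is the number of variables alpha_0..alpha_n *)
Local Notation P := {mpoly K[nv]}.

Definition mons (d : nat) : seq 'X_{1..nv} :=
  [seq bmnm m | m <- enum {: 'X_{1..nv < d.+1}} & mdeg (bmnm m) == d].

Definition dimS (d : nat) : nat := size (mons d).

Definition is_ideal (I : P -> Prop) : Prop :=
  [/\ I 0, (forall p q, I p -> I q -> I (p + q)) & (forall a p, I p -> I (a * p))].

Definition is_homog_ideal (I : P -> Prop) : Prop :=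
  is_ideal I /\ forall p d, I p -> I (pihomog mdeg d p).

Definition ideal_mul (J I : P -> Prop) : P -> Prop :=
  fun p => exists s : seq (P * P),
    (forall x, x \in s -> J x.1 /\ I x.2) /\ p = \sum_(x <- s) x.1 * x.2.

Fixpoint ideal_pow (I : P -> Prop) (k : nat) : P -> Prop :=
  match k with
  | 0%N => fun _ => True
  | k'.+1 => ideal_mul (ideal_pow I k') I
  end.

Definition basis_deg (I : P -> Prop) (d : nat) (B : seq P) : Prop :=
  [/\ (forall p, p \in B -> I p /\ p \is d.-homog),
      (forall c : 'I_(size B) -> K,
          \sum_(i < size B) c i *: B`_i = 0 -> forall i, c i = 0)
    & (forall p, I p -> p \is d.-homog ->
          exists c : 'I_(size B) -> K, p = \sum_(i < size B) c i *: B`_i)].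

Definition hilbfun (I : P -> Prop) (h : int -> int) : Prop :=
  forall d : int, match d with
  | Posz d' => exists B, basis_deg I d' B /\ h d = (dimS d')%:Z - (size B)%:Z
  | Negz _ => h d = 0
  end.

Definition in_Hilb (h : int -> int) (I : P -> Prop) : Prop :=
  is_homog_ideal I /\ hilbfun I h.

(* saturation with respect to m = (alpha_0, ..., alpha_n) *)
Definition saturated (I : P -> Prop) : Prop :=
  forall p N, (forall m, m \in mons N -> I ('X_[m] * p)) -> I p.

(* homogeneous ideal of a finite set of points of P^n, given by
   representatives pts i in K^(n+1) \ {0} *)
Definition ideal_of_points r (pts : 'I_r -> 'I_nv -> K) : P -> Prop :=
  fun p => forall (i : 'I_r) (d : nat), (pihomog mdeg d p).@[pts i] = 0.

Definition distinct_proj_points r (pts : 'I_r -> 'I_nv -> K) : Prop :=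
  (forall i, exists j, pts i j != 0) /\
  (forall i i', i != i' -> ~ exists c : K, forall j, pts i j = c * pts i' j).

Definition Sip (h : int -> int) (r : nat) (J : P -> Prop) : Prop :=
  in_Hilb h J /\
  exists pts : 'I_r -> 'I_nv -> K,
    distinct_proj_points pts /\ J = ideal_of_points pts.

(* Zariski topology on the closed points of Hilb^h_S.
   For a finite list of degrees D, a tuple of bases Bs of (I_d)_{d in D} gives
   a tuple of matrices (coefficients w.r.t. monomials); the coordinates below
   list all the entries of these matrices. *)
Definition bases_degs (I : P -> Prop) (D : seq nat) (Bs : seq (seq P)) : Prop :=
  size Bs = size D /\
  forall j, (j < size D)%N -> basis_deg I (nth 0%N D j) (nth [::] Bs j).

Definition coords (D : seq nat) (Bs : seq (seq P)) : seq K :=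
  flatten [seq flatten [seq [seq p@_m | m <- mons x.1] | p <- x.2]
          | x <- zip D Bs].

Definition coordv (N : nat) (D : seq nat) (Bs : seq (seq P)) : 'I_N -> K :=
  fun i => nth 0 (coords D Bs) i.

Definition basic_closed (D : seq nat) (N : nat) (F : {mpoly K[N]})
    (I : P -> Prop) : Prop :=
  forall Bs, bases_degs I D Bs -> F.@[@coordv N D Bs] = 0.

(* Slip_{h,n} = closure of Sip_{h,n} in Hilb^h_S *)
Definition Slip (h : int -> int) (r : nat) (I0 : P -> Prop) : Prop :=
  in_Hilb h I0 /\
  forall (D : seq nat) (N : nat) (F : {mpoly K[N]}),
    (forall J, Sip h r J -> basic_closed D F J) -> basic_closed D F I0.

End Defs.

(* Main.v *)
Require Import Defs.
From HB Require Import structures.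
From mathcomp Require Import all_boot all_order all_algebra.
From mathcomp Require Import mpoly.
Set Implicit Arguments. Unset Strict Implicit. Unset Printing Implicit Defensive.
Import Order.TTheory GRing.Theory Num.Theory.
Local Open Scope ring_scope.

Section Vec.
Variables (K : fieldType) (nv : nat).
Local Notation P := {mpoly K[nv]}.
Local Notation dimS := (dimS nv).
Local Notation mons := (mons nv).

Lemma mons_uniq d : uniq (mons d).
Proof.
rewrite /mons map_inj_in_uniq; first by apply: filter_uniq; apply: enum_uniq.
by move=> x y _ _; apply: val_inj.
Qed.

Lemma mem_mons d m : (m \in mons d) = (mdeg m == d).
Proof.
apply/idP/idP.
- by case/mapP=> b; rewrite mem_filter => /andP[h _] ->.
- move=> /eqP hd; apply/mapP.
  have hb : (mdeg m < d.+1)%N by rewrite hd.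
  exists (BMultinom hb); last by [].
  by rewrite mem_filter /= hd eqxx mem_enum.
Qed.

Definition mon d (j : 'I_(dimS d)) : 'X_{1..nv} := nth 0%MM (mons d) j.

Lemma mon_deg d j : mdeg (@mon d j) = d.
Proof. by apply/eqP; rewrite -mem_mons mem_nth. Qed.

Lemma mon_inj d : injective (@mon d).
Proof.
move=> i j /eqP; rewrite /mon nth_uniq ?mons_uniq // => /eqP h.
exact: val_inj.
Qed.

Lemma mon_surj d m : mdeg m = d -> exists j, m = @mon d j.
Proof.
move=> hd; have hm : m \in mons d by rewrite mem_mons hd.
have hi : (index m (mons d) < dimS d)%N by rewrite /dimS index_mem.
exists (Ordinal hi).
  by rewrite /mon /= nth_index.
Qed.

Definition vec d (p : P) : 'rV[K]_(dimS d) := \row_j p@_(mon j).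
Definition pol d (v : 'rV[K]_(dimS d)) : P := \sum_j v 0 j *: 'X_[mon j].
Arguments pol : clear implicits.

Lemma pol_homog d v : pol d v \is d.-homog.
Proof.
rewrite /pol; apply: (big_ind (fun p : P => p \is d.-homog)).
- exact: dhomog0.
- by move=> x y; apply: dhomogD.
- by move=> j _; apply: dhomogZ; rewrite dhomogX; apply/eqP; apply: mon_deg.
Qed.

Lemma mcoeff_pol d v j : (pol d v)@_(mon j) = v 0 j.
Proof.
rewrite /pol raddf_sum (bigD1 j) //= mcoeffZ mcoeffX eqxx mulr1 big1 ?addr0 //.
move=> i hij; rewrite mcoeffZ mcoeffX.
case: eqP => [/mon_inj h|]; last by rewrite mulr0.
by rewrite h eqxx in hij.
Qed.

Lemma polK d : cancel (pol d) (vec d).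
Proof. by move=> v; apply/rowP=> j; rewrite mxE mcoeff_pol. Qed.

Lemma vecK d p : p \is d.-homog -> pol d (vec d p) = p.
Proof.
move=> hp; apply/mpolyP=> m.
have [hd|hd] := eqVneq (mdeg m) d.
  by have [j ->] := mon_surj hd; rewrite mcoeff_pol mxE.
rewrite (dhomog_nemf_coeff hp hd).
by rewrite (dhomog_nemf_coeff (pol_homog (vec d p)) hd).
Qed.

Lemma vec_inj d p q : p \is d.-homog -> q \is d.-homog -> vec d p = vec d q -> p = q.
Proof. by move=> hp hq h; rewrite -(vecK hp) -(vecK hq) h. Qed.

Lemma vecD d p q : vec d (p + q) = vec d p + vec d q.
Proof. by apply/rowP=> j; rewrite !mxE mcoeffD. Qed.

Lemma vecZ d c p : vec d (c *: p) = c *: vec d p.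
Proof. by apply/rowP=> j; rewrite !mxE mcoeffZ. Qed.

Lemma vec0 d : vec d 0 = 0.
Proof. by apply/rowP=> j; rewrite !mxE mcoeff0. Qed.

Lemma vec_sum d I (r : seq I) (F : I -> P) :
  vec d (\sum_(i <- r) F i) = \sum_(i <- r) vec d (F i).
Proof.
elim: r => [|x r IH]; first by rewrite !big_nil vec0.
by rewrite !big_cons vecD IH.
Qed.

Definition inspan (G : seq P) (p : P) :=
  exists c : 'I_(size G) -> K, p = \sum_(i < size G) c i *: G`_i.

Lemma inspan0 G : inspan G 0.
Proof. by exists (fun _ => 0); rewrite big1 // => i _; rewrite scale0r. Qed.

Lemma inspanD G p q : inspan G p -> inspan G q -> inspan G (p + q).
Proof.
move=> [c ->] [c' ->]; exists (fun i => c i + c' i).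
by rewrite -big_split; apply: eq_bigr => i _; rewrite scalerDl.
Qed.

Lemma inspanZ G a p : inspan G p -> inspan G (a *: p).
Proof.
move=> [c ->]; exists (fun i => a * c i).
by rewrite scaler_sumr; apply: eq_bigr => i _; rewrite scalerA.
Qed.

Lemma inspan_mem G g : g \in G -> inspan G g.
Proof.
move=> hg; have hi : (index g G < size G)%N by rewrite index_mem.
pose j := Ordinal hi.
exists (fun i => (i == j)%:R).
rewrite (bigD1 j) //= eqxx scale1r big1 ?addr0; first by rewrite nth_index.
by move=> i /negbTE ->; rewrite scale0r.
Qed.

Lemma inspan_sum G (I : eqType) (r : seq I) (F : I -> P) :
  (forall i, i \in r -> inspan G (F i)) -> inspan G (\sum_(i <- r) F i).
Proof.
elim: r => [|x r IH] h; first by rewrite big_nil; apply: inspan0.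
rewrite big_cons; apply: inspanD; first by apply: h; rewrite inE eqxx.
by apply: IH => i hi; apply: h; rewrite inE hi orbT.
Qed.

Lemma inspan_trans G H p :
  (forall g, g \in G -> inspan H g) -> inspan G p -> inspan H p.
Proof.
move=> hG [c ->]; apply: inspan_sum => i _; apply: inspanZ.
by apply: hG; rewrite mem_nth.
Qed.

Lemma inspanM G H x y :
  inspan G x -> inspan H y -> inspan [seq g * h | g <- G, h <- H] (x * y).
Proof.
move=> [c ->] [c' ->]; rewrite mulr_suml; apply: inspan_sum => i _.
rewrite mulr_sumr; apply: inspan_sum => j _.
rewrite -scalerAl -scalerAr; apply: inspanZ; apply: inspanZ; apply: inspan_mem.
by apply/allpairsP; exists (G`_i, H`_j); rewrite !mem_nth.
Qed.

Definition MG d (G : seq P) : 'M[K]_(size G, dimS d) :=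
  \matrix_(i, j) (G`_i)@_(mon j).

Lemma row_MG d G i : row i (MG d G) = vec d G`_i.
Proof. by apply/rowP=> j; rewrite !mxE. Qed.

Lemma mul_MG d G (u : 'rV_(size G)) :
  u *m MG d G = vec d (\sum_i u 0 i *: G`_i).
Proof.
rewrite mulmx_sum_row vec_sum; apply: eq_bigr => i _.
by rewrite row_MG vecZ.
Qed.

Lemma homog_sum d (I : eqType) (r : seq I) (F : I -> P) :
  (forall i, i \in r -> F i \is d.-homog) -> \sum_(i <- r) F i \is d.-homog.
Proof.
elim: r => [|x r IH] h; first by rewrite big_nil dhomog0.
rewrite big_cons dhomogD //; first by apply: h; rewrite inE eqxx.
by apply: IH => i hi; apply: h; rewrite inE hi orbT.
Qed.

Lemma homog_comb d (G : seq P) (c : 'I_(size G) -> K) :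
  (forall g, g \in G -> g \is d.-homog) ->
  \sum_(i < size G) c i *: G`_i \is d.-homog.
Proof.
move=> h; apply: homog_sum => i _; apply: dhomogZ.
by apply: h; rewrite mem_nth.
Qed.

Lemma inspan_submx d G p :
  (forall g, g \in G -> g \is d.-homog) -> p \is d.-homog ->
  inspan G p <-> (vec d p <= MG d G)%MS.
Proof.
move=> hG hp; split.
- move=> [c ->]; apply/submxP; exists (\row_i c i).
  by rewrite mul_MG; congr vec; apply: eq_bigr => i _; rewrite mxE.
- move=> /submxP [u hu]; exists (fun i => u 0 i).
  apply: (vec_inj hp); first exact: homog_comb.
  by rewrite hu mul_MG.
Qed.

Lemma basis_free (I : P -> Prop) d B : basis_deg I d B -> row_free (MG d B).
Proof.
move=> [hB hind _]; apply/inj_row_free => v; rewrite mul_MG => h0.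
have : \sum_i v 0 i *: B`_i = 0.
  apply: (@vec_inj d); rewrite ?dhomog0 ?vec0 //.
  by apply: homog_comb => g /hB [].
move/hind => hc; apply/rowP => i; rewrite mxE; exact: hc.
Qed.

Lemma basis_rank (I : P -> Prop) d B : basis_deg I d B -> \rank (MG d B) = size B.
Proof. by move/basis_free/eqP. Qed.

Lemma basis_le (I : P -> Prop) d B B' : basis_deg I d B -> basis_deg I d B' ->
  (MG d B <= MG d B')%MS.
Proof.
move=> hB [hB' _ hsp]; apply/row_subP => i.
rewrite row_MG; case: hB => hB _ _.
have hi : B`_i \in B by rewrite mem_nth.
have [hI hh] := hB _ hi.
apply/(inspan_submx (fun g hg => (hB' g hg).2) hh).
exact: hsp.
Qed.

Lemma basis_size (I : P -> Prop) d B B' : basis_deg I d B -> basis_deg I d B' ->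
  size B = size B'.
Proof.
move=> h h'; apply/eqP; rewrite eqn_leq.
rewrite -(basis_rank h) -(basis_rank h') !mxrankS //; exact: (basis_le h h') || exact: (basis_le h' h).
Qed.

End Vec.
Arguments pol {K nv} d v.

Section GenDef.
Variables (R : comNzRingType) (nv : nat).
Local Notation PR := {mpoly R[nv]}.
Variable bs : nat -> seq PR.

Fixpoint gen (k a : nat) : seq PR :=
  match k with
  | 0%N => [seq 'X_[m] | m <- mons nv a]
  | k'.+1 => flatten [seq [seq x * b | x <- gen k' (a - a'), b <- bs a'] | a' <- iota 0 a.+1]
  end.
Lemma genS k a : gen k.+1 a =
  flatten [seq [seq x * b | x <- gen k (a - a'), b <- bs a'] | a' <- iota 0 a.+1].
Proof. by []. Qed.
End GenDef.

Lemma gen_map (R S : comNzRingType) nv (f : {rmorphism R -> S}) (bs : nat -> seq {mpoly R[nv]}) k a :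
  map (map_mpoly f) (gen bs k a) = gen (fun a => map (map_mpoly f) (bs a)) k a.
Proof.
elim: k a => [|k IH] a.
  by rewrite /= -map_comp; apply: eq_map => m /=; rewrite map_mpolyX.
rewrite !genS map_flatten -map_comp; congr flatten; apply: eq_map => a' /=.
rewrite map_allpairs -IH allpairs_mapl allpairs_mapr.
by apply: eq_allpairs => x y; rewrite rmorphM.
Qed.

Section GenProps.
Variables (K : fieldType) (nv : nat).
Local Notation P := {mpoly K[nv]}.

Lemma ideal_pow_ideal (I : P -> Prop) k : is_ideal I -> is_ideal (ideal_pow I k).
Proof.
move=> hI; elim: k => [|k [h0 hD hM]] //=.
case: hI => i0 iD iM; split.
- by exists [::]; split => //; rewrite big_nil.
- move=> p q [s [hs ->]] [t [ht ->]]; exists (s ++ t); split; last by rewrite big_cat.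
  by move=> x; rewrite mem_cat => /orP[/hs|/ht].
- move=> a p [s [hs ->]]; exists [seq (a * x.1, x.2) | x <- s]; split.
    by move=> x /mapP [y /hs [h1 h2] ->] /=; split => //; apply: hM.
  by rewrite big_map mulr_sumr; apply: eq_bigr => x _ /=; rewrite mulrA.
Qed.

Lemma ideal_pow_comb (I : P -> Prop) k (G : seq P) (c : 'I_(size G) -> K) :
  is_ideal I -> (forall g, g \in G -> ideal_pow I k g) ->
  ideal_pow I k (\sum_(i < size G) c i *: G`_i).
Proof.
move=> hI hG; have [h0 hD hM] := ideal_pow_ideal k hI.
apply: (big_ind (ideal_pow I k)) => // i _.
by rewrite -mul_mpolyC; apply: hM; apply: hG; rewrite mem_nth.
Qed.

Lemma pihomog_sum d (J : Type) (r : seq J) (F : J -> P) :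
  pihomog mdeg d (\sum_(i <- r) F i) = \sum_(i <- r) pihomog mdeg d (F i).
Proof.
elim: r => [|x r IH]; first by rewrite !big_nil pihomog0.
by rewrite !big_cons pihomogD IH.
Qed.

Variables (I : P -> Prop) (bs : nat -> seq P) (D : nat).
Hypothesis hI : is_homog_ideal I.
Hypothesis hbs : forall a, (a <= D)%N -> basis_deg I a (bs a).

Lemma mem_gen k a g : g \in gen bs k.+1 a ->
  exists a' x b, [/\ (a' <= a)%N, x \in gen bs k (a - a'), b \in bs a' & g = x * b].
Proof.
move=> /flattenP [s /mapP [a' ha' ->]] /allpairsP [[x b] [hx hb ->]].
by exists a', x, b; split => //; move: ha'; rewrite mem_iota add0n ltnS.
Qed.

Lemma gen_homog k dd g : (dd <= D)%N -> g \in gen bs k dd -> g \is dd.-homog.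
Proof.
elim: k dd g => [|k IH] dd g hdD.
  by move=> /mapP [m hm ->]; rewrite dhomogX; move: hm; rewrite mem_mons.
move=> /mem_gen [a' [x [b [ha' hx hb ->]]]].
have -> : dd = ((dd - a') + a')%N by rewrite subnK.
apply: dhomogM; first by apply: IH hx; apply: leq_trans (leq_subr _ _) hdD.
by have [h _ _] := hbs (leq_trans ha' hdD); case: (h b hb).
Qed.

Lemma gen_in k a g : (a <= D)%N -> g \in gen bs k a -> ideal_pow I k g.
Proof.
elim: k a g => [|k IH] a g haD //.
move=> /mem_gen [a' [x [b [ha' hx hb ->]]]].
exists [:: (x, b)]; split; last by rewrite big_seq1.
move=> z; rewrite inE => /eqP -> /=; split.
  by apply: IH hx; apply: leq_trans (leq_subr _ _) haD.
by have [h _ _] := hbs (leq_trans ha' haD); case: (h b hb).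
Qed.

Lemma gen_span k p a : ideal_pow I k p -> (a <= D)%N ->
  inspan (gen bs k a) (pihomog mdeg a p).
Proof.
elim: k p a => [|k IH] p a.
  move=> _ _ /=; rewrite -(vecK (pihomogP mdeg a p)) /pol.
  apply: inspan_sum => j _; apply: inspanZ; apply: inspan_mem.
  by apply: map_f; apply: mem_nth.
move=> [s [hs ->]] haD; rewrite pihomog_sum; apply: inspan_sum => [[x y]] /hs [hx hy].
rewrite [(_, _).1]/= [(_, _).2]/=.
pose N := maxn (msize x) (msize y).
rewrite (pihomog_partitionE (mf := mdeg) (k := N) (p := x)) ?leq_maxl //.
rewrite (pihomog_partitionE (mf := mdeg) (k := N) (p := y)) ?leq_maxr //.
rewrite mulr_suml pihomog_sum; apply: inspan_sum => i _.
rewrite mulr_sumr pihomog_sum; apply: inspan_sum => j _.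
have hh : pihomog mdeg i x * pihomog mdeg j y \is (i + j)%N.-homog.
  by apply: dhomogM; apply: pihomogP.
have [hij|hij] := eqVneq (i + j)%N a; last first.
  by rewrite (pihomog_ne0 hij hh); apply: inspan0.
rewrite pihomog_dE //; subst a.
have hia : (i <= i + j)%N by rewrite leq_addr.
have hja : (j <= i + j)%N by rewrite leq_addl.
apply: (@inspan_trans _ _ [seq g * b | g <- gen bs k i, b <- bs j]).
  move=> g hg; apply: inspan_mem; rewrite genS; apply/flattenP.
  exists [seq x0 * b | x0 <- gen bs k (i + j - j), b <- bs j]; last first.
    by rewrite addnK.
  by apply/mapP; exists (j : nat); first by rewrite mem_iota add0n ltnS.
apply: inspanM; first by apply: IH => //; apply: leq_trans hia haD.
have [hI0 hIh] := hI.
have [_ _ hsp] := hbs (leq_trans hja haD).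
apply: hsp; first by apply: hIh.
exact: pihomogP.
exact: hh.
Qed.

End GenProps.

Section Ord.
Variables (K : fieldType) (nv : nat).
Local Notation P := {mpoly K[nv]}.

Definition LD k (Z : P) := forall m, m \in msupp Z -> (k <= mdeg m)%N.
Definition UD k (Z : P) := forall m, m \in msupp Z -> (mdeg m <= k)%N.

Lemma LD0 k : LD k 0.
Proof. by move=> m; rewrite msupp0. Qed.
Lemma UD0 k : UD k 0.
Proof. by move=> m; rewrite msupp0. Qed.

Lemma LD0p p : LD 0 p. Proof. by []. Qed.

Lemma LDD k p q : LD k p -> LD k q -> LD k (p + q).
Proof. by move=> hp hq m /msuppD_le; rewrite mem_cat => /orP[/hp|/hq]. Qed.
Lemma UDD k p q : UD k p -> UD k q -> UD k (p + q).
Proof. by move=> hp hq m /msuppD_le; rewrite mem_cat => /orP[/hp|/hq]. Qed.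

Lemma LDN k p : LD k p -> LD k (- p).
Proof. by move=> hp m; rewrite (perm_mem (msuppN p)); apply: hp. Qed.

Lemma LDB k p q : LD k p -> LD k q -> LD k (p - q).
Proof. by move=> hp hq; apply: LDD => //; apply: LDN. Qed.

Lemma LDZ k c p : LD k p -> LD k (c *: p).
Proof. by move=> hp m /msuppZ_le; apply: hp. Qed.
Lemma UDZ k c p : UD k p -> UD k (c *: p).
Proof. by move=> hp m /msuppZ_le; apply: hp. Qed.

Lemma LDM a b p q : LD a p -> LD b q -> LD (a + b) (p * q).
Proof.
move=> hp hq m /msuppM_le /allpairsP [[m1 m2] [h1 h2 ->]] /=.
by rewrite mdegD leq_add ?hp ?hq.
Qed.
Lemma UDM a b p q : UD a p -> UD b q -> UD (a + b) (p * q).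
Proof.
move=> hp hq m /msuppM_le /allpairsP [[m1 m2] [h1 h2 ->]] /=.
by rewrite mdegD leq_add ?hp ?hq.
Qed.

Lemma LD_le k k' p : (k' <= k)%N -> LD k p -> LD k' p.
Proof. by move=> hk hp m /hp; apply: leq_trans. Qed.
Lemma UD_le k k' p : (k <= k')%N -> UD k p -> UD k' p.
Proof. by move=> hk hp m /hp /leq_trans; apply. Qed.

Lemma UD1 : UD 0 (1 : P).
Proof. by move=> m; rewrite msupp1 inE => /eqP ->; rewrite mdeg0. Qed.

Lemma UDC c : UD 0 (c%:MP : P).
Proof. by move=> m; rewrite msuppC; case: eqP => //= _; rewrite inE => /eqP ->; rewrite mdeg0. Qed.

Lemma LDX a n p : LD a p -> LD (a * n) (p ^+ n).
Proof.
move=> hp; elim: n => [|n IH]; first by rewrite muln0.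
by rewrite exprS mulnS; apply: LDM.
Qed.
Lemma UDX a n p : UD a p -> UD (a * n) (p ^+ n).
Proof.
move=> hp; elim: n => [|n IH]; first by rewrite muln0 expr0; apply: UD1.
by rewrite exprS mulnS; apply: UDM.
Qed.

Lemma LD_sum k (J : eqType) (r : seq J) (F : J -> P) :
  (forall i, i \in r -> LD k (F i)) -> LD k (\sum_(i <- r) F i).
Proof.
elim: r => [|x r IH] h; first by rewrite big_nil; apply: LD0.
rewrite big_cons; apply: LDD; first by apply: h; rewrite inE eqxx.
by apply: IH => i hi; apply: h; rewrite inE hi orbT.
Qed.
Lemma UD_sum k (J : eqType) (r : seq J) (F : J -> P) :
  (forall i, i \in r -> UD k (F i)) -> UD k (\sum_(i <- r) F i).
Proof.
elim: r => [|x r IH] h; first by rewrite big_nil; apply: UD0.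
rewrite big_cons; apply: UDD; first by apply: h; rewrite inE eqxx.
by apply: IH => i hi; apply: h; rewrite inE hi orbT.
Qed.

Lemma LDUD0 k p : LD k.+1 p -> UD k p -> p = 0.
Proof.
move=> hl hu; apply/eqP; rewrite -msupp_eq0.
case E: (msupp p) => [|m s] //.
have hm : m \in msupp p by rewrite E inE eqxx.
by have := leq_trans (hl m hm) (hu m hm); rewrite ltnn.
Qed.

Lemma LD1 p : p@_0%MM = 0 -> LD 1 p.
Proof.
move=> h0 m hm; rewrite lt0n mdeg_eq0; apply/eqP => hm0.
by move: hm; rewrite mcoeff_msupp hm0 h0 eqxx.
Qed.

Lemma mpoly_morph_eq (S : comNzRingType) (f g : {rmorphism P -> S}) :
  (forall c, f c%:MP = g c%:MP) -> (forall i, f 'X_i = g 'X_i) -> forall p, f p = g p.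
Proof.
move=> hc hX p; rewrite (mpolyE p) !rmorph_sum; apply: eq_bigr => m _.
rewrite -mul_mpolyC !rmorphM hc; congr (_ * _).
rewrite mpolyXE_id !rmorph_prod; apply: eq_bigr => i _.
by rewrite !rmorphXn hX.
Qed.

Lemma meval0_coef (Z : P) : Z.@[fun _ => 0] = Z@_0%MM.
Proof.
rewrite {2}(mpolyE Z) raddf_sum /= mevalE; apply: eq_bigr => m _.
rewrite mcoeffZ mcoeffX; congr (_ * _).
have [->|hm] := eqVneq m 0%MM.
  by rewrite big1 // => i _; rewrite mnm0E expr0.
have [i hi] : exists i, m i != 0%N.
  apply/existsP; move: hm; apply: contraR; rewrite negb_exists => /forallP h.
  by apply/eqP/mnmP => i; rewrite mnm0E; apply/eqP; move: (h i); rewrite negbK.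
by rewrite (bigD1 i) //= expr0n (negbTE hi) mul0r.
Qed.

Local Notation Tq q := (mmap (@mpolyC nv K) (fun j : 'I_nv => 'X_j + (q j)%:MP)).

Lemma TqC q c : Tq q c%:MP = c%:MP.
Proof. by rewrite mmapC. Qed.

Lemma TqX q i : Tq q 'X_i = 'X_i + (q i)%:MP.
Proof. by rewrite mmapX mmap1U. Qed.

Lemma TqK q p : Tq (fun j => - q j) (Tq q p) = p.
Proof.
have := @mpoly_morph_eq _ (Tq (fun j => - q j) \o Tq q) idfun.
apply => [c|i] /=; first by rewrite !TqC.
by rewrite TqX rmorphD /= TqX TqC -addrA -mpolyCD addNr mpolyC0 addr0.
Qed.

Lemma Tq_coef0 q p : (Tq q p)@_0%MM = p.@[q].
Proof.
rewrite -meval0_coef.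
have := @mpoly_morph_eq _ (meval (fun _ => 0) \o Tq q) (meval q).
apply => [c|i] /=; first by rewrite TqC !mevalC.
by rewrite TqX mevalD mevalC mevalXU add0r mevalXU.
Qed.

Lemma Tq_UD q d p : p \is d.-homog -> UD d (Tq q p).
Proof.
move=> hp; rewrite /mmap; apply: UD_sum => m hm.
rewrite -[d]add0n; apply: UDM; first exact: UDC.
rewrite -(dhomog_mf hp hm) /= mdegE /mmap1.
apply: (big_rec2 (fun a (z : P) => UD a z)); first exact: UD1.
move=> i a z _ hz; apply: UDM => //.
have h1 : UD 1 ('X_i + (q i)%:MP : P).
  move=> m'; move/msuppD_le; rewrite mem_cat => /orP[|].
    by rewrite msuppX inE => /eqP ->; rewrite mdeg1.
  by move=> hm'; apply: leq_trans (@UDC (q i) _ hm') _.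
by move: (UDX (n := m i) h1); rewrite mul1n.
Qed.

Definition ord k q (p : P) := LD k (Tq q p).

Lemma ordv0 q k : ord k q 0.
Proof. by rewrite /ord rmorph0; apply: LD0. Qed.

Lemma ordvD k q p p' : ord k q p -> ord k q p' -> ord k q (p + p').
Proof. by rewrite /ord rmorphD; apply: LDD. Qed.

Lemma ordvB k q p p' : ord k q p -> ord k q p' -> ord k q (p - p').
Proof. by rewrite /ord rmorphB; apply: LDB. Qed.

Lemma ordvZ k q c p : ord k q p -> ord k q (c *: p).
Proof. by rewrite /ord -mul_mpolyC rmorphM /= TqC mul_mpolyC; apply: LDZ. Qed.

Lemma ordvM a b q p p' : ord a q p -> ord b q p' -> ord (a + b) q (p * p').
Proof. by rewrite /ord rmorphM; apply: LDM. Qed.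

Lemma ordvMl k q a p : ord k q p -> ord k q (a * p).
Proof. by move=> h; rewrite -[k]add0n; apply: ordvM. Qed.

Lemma ordvX a n q p : ord a q p -> ord (a * n) q (p ^+ n).
Proof. by rewrite /ord rmorphXn; apply: LDX. Qed.

Lemma ordv_sum k q (J : eqType) (r : seq J) (F : J -> P) :
  (forall i, i \in r -> ord k q (F i)) -> ord k q (\sum_(i <- r) F i).
Proof. by move=> h; rewrite /ord rmorph_sum; apply: LD_sum. Qed.

Lemma ordv1 q p : p.@[q] = 0 -> ord 1 q p.
Proof. by move=> h; apply: LD1; rewrite Tq_coef0. Qed.

Lemma LD_cancel k (U Y : P) : LD k (U * Y) -> U@_0%MM != 0 -> LD k Y.
Proof.
move=> hUY hc; set c := U@_0%MM in hc.
pose W := c%:MP - U; pose w := c^-1 *: W.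
have hw : LD 1 w.
  by apply: LDZ; apply: LD1; rewrite /W mcoeffB mcoeffC eqxx mulr1 subrr.
have hU : c^-1 *: U = 1 - w.
  have h1 : c^-1 *: (c%:MP : P) = 1.
    by rewrite -mul_mpolyC -mpolyCM mulVf // mpolyC1.
  by rewrite /w /W scalerBr h1 opprB addrC subrK.
pose S := \sum_(i < k) w ^+ i.
have hS : (1 - w) * S = 1 - w ^+ k.
  by rewrite -[1 - w]opprB mulNr -subrX1 opprB.
have -> : Y = S * (c^-1 *: (U * Y)) + w ^+ k * Y.
  by rewrite scalerAl hU mulrA [S * _]mulrC hS mulrBl mul1r subrK.
apply: LDD; first by rewrite -[k]add0n; apply: LDM => //; apply: LDZ.
have hX : LD k (w ^+ k) by move: (LDX (n := k) hw); rewrite mul1n.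
by move: (LDM hX (@LD0p Y)); rewrite addn0.
Qed.

End Ord.

Section RankJ.
Variables (K : fieldType) (nv : nat).
Local Notation P := {mpoly K[nv]}.
Local Notation Tq q := (mmap (@mpolyC nv K) (fun j : 'I_nv => 'X_j + (q j)%:MP)).
Variables (r : nat) (pts : 'I_r -> 'I_nv -> K).
Variables (k E d : nat).
Hypothesis hk : (1 <= k)%N.
Hypothesis hd : (k * E + k.-1 <= d)%N.
Variables (f L : 'I_r -> P).
Hypothesis hf : forall i, f i \is E.-homog.
Hypothesis hfv : forall i j, (f i).@[pts j] = (i == j)%:R.
Hypothesis hL : forall i, L i \is 1.-homog.
Hypothesis hLv : forall i, (L i).@[pts i] != 0.

Local Notation T := ('I_r * 'I_(dimS nv k.-1))%type.
Let s := (d - (k * E + k.-1))%N.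
Definition wv (z : T) : P := f z.1 ^+ k * (L z.1 ^+ s * 'X_[mon z.2]).

Lemma wv_homog z : wv z \is d.-homog.
Proof.
have -> : d = (E * k + (1 * s + k.-1))%N.
  by rewrite mul1n [(E * k)%N]mulnC [(s + _)%N]addnC addnA /s subnKC.
apply: dhomogM; first exact: dhomogMn.
apply: dhomogM; first exact: dhomogMn.
by rewrite dhomogX; apply/eqP; apply: mon_deg.
Qed.

Lemma keyE (c : T -> K) :
  (forall i, ord k (pts i) (\sum_z c z *: wv z)) -> forall z, c z = 0.
Proof.
move=> h [i0 t]; have := h i0.
have -> : \sum_z c z *: wv z = \sum_i \sum_t c (i, t) *: wv (i, t).
  by rewrite pair_bigA; apply: eq_bigr => [[i t']].
rewrite (bigD1 i0) //=.
set g := \sum_t _; set rest := \sum_(i | _) _ => htot.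
have hrest : ord k (pts i0) rest.
  rewrite /rest -big_filter; apply: ordv_sum => i; rewrite mem_filter => /andP[hi _].
  apply: ordv_sum => t' _; apply: ordvZ; rewrite /wv /= mulrC; apply: ordvMl.
  have h1 : ord 1 (pts i0) (f i).
    by apply: (@ordv1 K nv (pts i0) (f i)); rewrite hfv (negbTE hi).
  by move: (ordvX (n := k) h1); rewrite mul1n.
have hg : ord k (pts i0) g.
  by have := ordvB htot hrest; rewrite addrK.
pose U := f i0 ^+ k * L i0 ^+ s.
pose Pp := \sum_t (c (i0, t)) *: ('X_[mon t] : P).
have hgU : g = U * Pp.
  rewrite /g /Pp mulr_sumr; apply: eq_bigr => t' _.
  by rewrite /wv /U /= mulrA scalerAr.
move: hg; rewrite /ord hgU rmorphM => hUP.
have hU0 : (Tq (pts i0) U)@_0%MM != 0.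
  rewrite Tq_coef0 /U mevalM !rmorphXn /= hfv eqxx expr1n mul1r.
  by rewrite expf_neq0.
have hLD := LD_cancel hUP hU0.
have hPh : Pp \is k.-1.-homog.
  apply: homog_sum => t' _; apply: dhomogZ.
  by rewrite dhomogX; apply/eqP; apply: mon_deg.
have hUD := Tq_UD (q := pts i0) hPh.
have hT0 : Tq (pts i0) Pp = 0 by apply: LDUD0 hUD; rewrite prednK.
have hP0 : Pp = 0 by rewrite -(TqK (pts i0) Pp) hT0 rmorph0.
have : (pol (k.-1) (\row_t c (i0, t)) : P) = Pp.
  by rewrite /pol /Pp; apply: eq_bigr => t' _; rewrite mxE.
by rewrite hP0 => /(congr1 (mcoeff (mon t))); rewrite mcoeff_pol mxE mcoeff0.
Qed.

Definition Wmx : 'M[K]_(#|{: T}|, dimS nv d) :=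
  \matrix_(x, j) (wv (enum_val x))@_(mon j).

Lemma row_Wmx x : row x Wmx = vec d (wv (enum_val x)).
Proof. by apply/rowP=> j; rewrite !mxE. Qed.

Variables (g : nat) (M : 'M[K]_(g, dimS nv d)).
Hypothesis hM : forall i i0, ord k (pts i0) (pol d (row i M)).

Lemma claimC (u : 'rV_#|{: T}|) : (u *m Wmx <= M)%MS -> u = 0.
Proof.
move=> /submxP [u' hu'].
have e1 : u *m Wmx = vec d (\sum_x u 0 x *: wv (enum_val x)).
  rewrite mulmx_sum_row vec_sum; apply: eq_bigr => x _.
  by rewrite row_Wmx vecZ.
have e2 : u' *m M = vec d (\sum_i u' 0 i *: pol d (row i M)).
  rewrite mulmx_sum_row vec_sum; apply: eq_bigr => i _.
  by rewrite vecZ polK.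
have hb : \sum_x u 0 x *: wv (enum_val x) = \sum_i u' 0 i *: pol d (row i M).
  apply: (@vec_inj _ _ d).
  - by apply: homog_sum => x _; apply: dhomogZ; apply: wv_homog.
  - by apply: homog_sum => i _; apply: dhomogZ; apply: pol_homog.
  by rewrite -e1 -e2.
have hz : forall z, u 0 (enum_rank z) = 0.
  apply: keyE => i0.
  have -> : \sum_z u 0 (enum_rank z) *: wv z = \sum_x u 0 x *: wv (enum_val x).
    rewrite (big_enum_val (fun z => u 0 (enum_rank z) *: wv z)) /=.
    by apply: eq_bigr => x _; rewrite enum_valK.
  rewrite hb; apply: ordv_sum => i _; apply: ordvZ; exact: hM.
apply/rowP => x; rewrite mxE; have := hz (enum_val x); rewrite enum_valK => ->.
by [].
Qed.

Lemma rankJ : (\rank M + r * dimS nv k.-1 <= dimS nv d)%N.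
Proof.
have hfree : row_free Wmx.
  by apply/inj_row_free => v hv; apply: claimC; rewrite hv sub0mx.
have hcap : (M :&: Wmx)%MS = 0.
  apply/row_matrixP => i; rewrite row0.
  have h1 : (row i (M :&: Wmx)%MS <= Wmx)%MS.
    by apply: submx_trans (row_sub _ _) (capmxSr _ _).
  have h2 : (row i (M :&: Wmx)%MS <= M)%MS.
    by apply: submx_trans (row_sub _ _) (capmxSl _ _).
  move: h1 => /submxP [u hu]; move: h2; rewrite hu => /claimC ->.
  by rewrite mul0mx.
have hW : \rank Wmx = (r * dimS nv k.-1)%N.
  by rewrite (eqP hfree) card_prod !card_ord.
have := mxrank_sum_cap M Wmx; rewrite hcap mxrank0 addn0 hW => <-.
exact: rank_leq_col.
Qed.

End RankJ.

Section SipRank.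
Variables (K : fieldType) (nv : nat).
Local Notation P := {mpoly K[nv]}.
Variables (r : nat) (pts : 'I_r -> 'I_nv -> K).
Local Notation J := (ideal_of_points pts).

Lemma meval_sumE v (I : Type) (rr : seq I) (F : I -> P) :
  (\sum_(i <- rr) F i).@[v] = \sum_(i <- rr) (F i).@[v].
Proof.
elim: rr => [|x rr IH]; first by rewrite !big_nil meval0.
by rewrite !big_cons mevalD IH.
Qed.

Lemma pts_homog E (p : P) : p \is E.-homog ->
  J p <-> (forall i, p.@[pts i] = 0).
Proof.
move=> hp; split.
  by move=> h i; have := h i E; rewrite pihomog_dE.
move=> h i d; have [<-|hd] := eqVneq E d.
  by rewrite pihomog_dE.
by rewrite (pihomog_ne0 hd hp) meval0.
Qed.

Lemma pts_eval (p : P) i : J p -> p.@[pts i] = 0.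
Proof.
move=> hp; rewrite (pihomog_partitionE (mf := mdeg) (k := msize p) (p := p)) //.
rewrite meval_sumE big1 // => d _; exact: hp.
Qed.

Lemma pts_ord k (p : P) i : ideal_pow J k p -> ord k (pts i) p.
Proof.
elim: k p => [|k IH] p; first by move=> _ m.
move=> [s [hs ->]]; apply: ordv_sum => x /hs [h1 h2].
rewrite -addn1; apply: ordvM; first exact: IH.
by apply: ordv1; apply: pts_eval.
Qed.

Definition Ev E : 'M[K]_(dimS nv E, r) := \matrix_(t, i) ('X_[mon t] : P).@[pts i].

Lemma Ev_mul E (u : 'rV_(dimS nv E)) i : (u *m Ev E) 0 i = (pol E u).@[pts i].
Proof.
rewrite !mxE /pol meval_sumE; apply: eq_bigr => t _.
by rewrite mxE mevalZ.
Qed.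

Lemma separating E B : basis_deg J E B -> (dimS nv E)%:Z - (size B)%:Z = r%:Z ->
  exists f : 'I_r -> P, forall i, f i \is E.-homog /\ forall j, (f i).@[pts j] = (i == j)%:R.
Proof.
move=> hB hsz.
have hker : (kermx (Ev E) == MG E B)%MS.
  apply/andP; split.
    apply/row_subP => i.
    have hv : row i (kermx (Ev E)) *m Ev E = 0 by rewrite -row_mul mulmx_ker row0.
    rewrite -(polK (row i (kermx (Ev E)))).
    have [hBm _ hsp] := hB.
    apply (proj1 (inspan_submx (fun g hg => (hBm g hg).2) (@pol_homog K nv E (row i (kermx (Ev E)))))).
    apply: hsp; last exact: (@pol_homog K nv E).
    apply (proj2 (pts_homog (@pol_homog K nv E (row i (kermx (Ev E)))))) => j.
    by rewrite -Ev_mul hv mxE.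
  apply/row_subP => i; apply/sub_kermxP; apply/rowP => j.
  have [hBm _ _] := hB.
  have hi : B`_i \in B by rewrite mem_nth.
  have [hJ hh] := hBm _ hi.
  rewrite row_MG Ev_mul vecK // mxE.
  by move/(pts_homog hh): hJ => ->.
have hrk : (size B + \rank (Ev E) = dimS nv E)%N.
  rewrite -(basis_rank hB) -(eqmx_rank hker) mxrank_ker subnK //.
  exact: rank_leq_row.
have hrE : \rank (Ev E) = r.
  apply/eqP; rewrite -eqz_nat; apply/eqP.
  move: hsz; have -> : (dimS nv E)%:Z = (size B)%:Z + (\rank (Ev E))%:Z.
    by rewrite -PoszD hrk.
  by rewrite addrAC subrr add0r.
have hfull : row_full (Ev E) by rewrite /row_full hrE.
exists (fun i => pol E (delta_mx 0 i *m pinvmx (Ev E))) => i; split.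
  exact: (@pol_homog K nv E).
move=> j; rewrite -Ev_mul mulmxKpV; last exact: submx_full.
by rewrite mxE eqxx /= eq_sym.
Qed.


End SipRank.

Lemma Sip_rank (K : fieldType) nv (r : nat) (h : int -> int) (J0 : {mpoly K[nv]} -> Prop) E k d g
  (M : 'M[K]_(g, dimS nv d)) :
  Sip h r J0 -> h (Posz E) = r%:Z -> (1 <= k)%N -> (k * E + k.-1 <= d)%N ->
  (forall i, ideal_pow J0 k (pol d (row i M))) ->
  (\rank M + r * dimS nv k.-1 <= dimS nv d)%N.
Proof.
move=> [[_ hh] [pts [[hnz _] hJ]]] hE hk hd hM; subst J0.
have := hh (Posz E) => /= [[B [hB hhE]]].
have [f hf] : exists f : 'I_r -> {mpoly K[nv]},
    forall i, f i \is E.-homog /\ forall j, (f i).@[pts j] = (i == j)%:R.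
  by apply: (separating hB); rewrite -hhE.
pose L i : {mpoly K[nv]} := if [pick j | pts i j != 0] is Some j then 'X_j else 0.
have hL i : L i \is 1.-homog /\ (L i).@[pts i] != 0.
  rewrite /L; case: pickP => [j hj|h0]; first by rewrite dhomogX mevalXU; split => //; apply/eqP; apply: mdeg1.
  by have [j hj] := hnz i; rewrite h0 in hj.
apply: (@rankJ K nv r pts k E d hk hd f L) => //.
- by move=> i; case: (hf i).
- by move=> i; case: (hf i).
- by move=> i; case: (hL i).
- by move=> i; case: (hL i).
- by move=> i i0; apply: pts_ord; apply: hM.
Qed.

Lemma nth_map0 (R S : nzRingType) (f : {additive R -> S}) (s : seq R) i :
  nth 0 (map f s) i = f (nth 0 s i).
Proof.
elim: s i => [|x s IH] [|i] //=; by rewrite raddf0.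
Qed.

Lemma nth_mapnil (T S : Type) (f : T -> S) (s : seq (seq T)) i :
  nth [::] (map (map f) s) i = map f (nth [::] s i).
Proof. by elim: s i => [|x s IH] [|i] //=. Qed.

Lemma gen_ext (R : comNzRingType) nv (bs1 bs2 : nat -> seq {mpoly R[nv]}) k a :
  bs1 =1 bs2 -> gen bs1 k a = gen bs2 k a.
Proof.
move=> e; elim: k a => [|k IH] a //.
rewrite !genS; congr flatten; apply: eq_map => a' /=.
by rewrite IH e.
Qed.

Section Coords.
Variables (nv : nat) (h : int -> int) (dd k : nat).

Definition Dg := iota 0 dd.+1.
Definition sz a : nat := `|(dimS nv a)%:Z - h (Posz a)|%N.
Definition sh1 := [seq (sz a * dimS nv a)%N | a <- Dg].
Definition Ntot := sumn sh1.
Arguments Dg : simpl never.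
Arguments sh1 : simpl never.
Arguments sz : simpl never.

Section Ring.
Variable R : comNzRingType.
Definition polR a (c : seq R) : {mpoly R[nv]} := \sum_(t < dimS nv a) c`_t *: 'X_[mon t].
Definition unflat (v : seq R) : seq (seq {mpoly R[nv]}) :=
  [seq [seq polR a c | c <- reshape (nseq (sz a) (dimS nv a)) (nth [::] (reshape sh1 v) a)]
     | a <- Dg].
Definition cv a (p : {mpoly R[nv]}) : seq R := [seq p@_m | m <- mons nv a].
Definition genK (Bs : seq (seq {mpoly R[nv]})) := gen (fun a => nth [::] Bs a) k dd.
Definition MatR g (Bs : seq (seq {mpoly R[nv]})) : 'M[R]_(g, dimS nv dd) :=
  \matrix_(i < g, j < dimS nv dd) ((genK Bs)`_i)@_(mon j).
End Ring.

Lemma polR_map (R S : comNzRingType) (f : {rmorphism R -> S}) a c :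
  map_mpoly f (polR a c) = polR a (map f c).
Proof.
rewrite /polR raddf_sum; apply: eq_bigr => t _ /=.
by rewrite map_mpolyZ map_mpolyX nth_map0.
Qed.

Lemma unflat_map (R S : comNzRingType) (f : {rmorphism R -> S}) v :
  map (map (map_mpoly f)) (unflat v) = unflat (map f v).
Proof.
rewrite /unflat; set S1 := sh1; set D1 := Dg; clearbody S1 D1.
rewrite -map_comp; apply: eq_map => a /=.
rewrite -map_reshape nth_mapnil -map_reshape -!map_comp.
by apply: eq_map => c; exact: polR_map.
Qed.

Lemma genK_map (R S : comNzRingType) (f : {rmorphism R -> S}) Bs :
  map (map_mpoly f) (genK Bs) = genK (map (map (map_mpoly f)) Bs).
Proof.
rewrite /genK gen_map; apply: gen_ext => a; by rewrite nth_mapnil.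
Qed.

Lemma MatR_map (R S : comNzRingType) (f : {rmorphism R -> S}) g Bs :
  map_mx f (MatR g Bs) = MatR g (map (map (map_mpoly f)) Bs).
Proof.
apply/matrixP => i j; rewrite !mxE -genK_map.
by rewrite (nth_map0 (map_mpoly f)) mcoeff_map_mpoly.
Qed.

End Coords.

Section CoordsK.
Variables (K : fieldType) (nv : nat) (h : int -> int) (dd : nat).
Local Notation P := {mpoly K[nv]}.
Local Notation Dg := (Dg dd).
Local Notation sz := (sz nv h).
Local Notation sh1 := (sh1 nv h dd).

Lemma polR_cv e (p : P) : p \is e.-homog -> polR nv e (cv e p) = p.
Proof.
move=> hp; rewrite -{2}(vecK hp) /polR /pol; apply: eq_bigr => t _.
by rewrite mxE /cv (nth_map 0%MM) // -/(dimS nv e) ltn_ord.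
Qed.

Lemma shape_cv a (B : seq P) : shape [seq cv a p | p <- B] = nseq (size B) (dimS nv a).
Proof. by elim: B => [|p B IH] //=; rewrite IH size_map. Qed.

Variable (I : P -> Prop) (Bs : seq (seq P)).
Hypothesis hBs : bases_degs I Dg Bs.
Hypothesis hsz : forall a, (a <= dd)%N -> size (nth [::] Bs a) = sz a.

Let L := [seq flatten [seq cv x.1 p | p <- x.2] | x <- zip Dg Bs].

Lemma size_Bs : size Bs = dd.+1.
Proof. by case: hBs => -> _; rewrite /Dg size_iota. Qed.

Lemma nth_L a : (a <= dd)%N -> nth [::] L a = flatten [seq cv a p | p <- nth [::] Bs a].
Proof.
move=> ha.
rewrite /L (nth_map (0%N, [::])); last by rewrite size_zip size_Bs /Dg size_iota minnn.
by rewrite nth_zip /Dg ?size_iota ?size_Bs // nth_iota.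
Qed.

Lemma shape_L : shape L = sh1.
Proof.
apply: (@eq_from_nth _ 0%N).
  by rewrite /shape /sh1 !size_map size_zip size_Bs /Dg size_iota minnn.
move=> a; rewrite /shape size_map /L size_map size_zip size_Bs /Dg size_iota minnn ltnS => ha.
rewrite (nth_map [::]); last by rewrite size_map size_zip size_Bs size_iota minnn.
rewrite nth_L // size_flatten shape_cv sumn_nseq hsz //.
by rewrite /sh1 (nth_map 0%N) ?size_iota // nth_iota // mulnC.
Qed.

Lemma unflat_coords : unflat nv h dd (coords Dg Bs) = Bs.
Proof.
have -> : coords Dg Bs = flatten L by [].
rewrite /unflat -shape_L flattenK.
rewrite -[RHS](mkseq_nth [::] Bs) size_Bs /mkseq /Dg; apply/eq_in_map => a.
rewrite mem_iota add0n ltnS => ha.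
rewrite nth_L // -{1}(hsz ha) -shape_cv flattenK -map_comp.
rewrite -[RHS](map_id (nth [::] Bs a)); apply/eq_in_map => p hp /=.
apply: polR_cv.
case: hBs => _ hb; have := hb a; rewrite /Dg size_iota ltnS nth_iota // add0n.
by move=> /(_ ha) [/(_ p hp) []].
Qed.

Lemma size_coords : size (coords Dg Bs) = Ntot nv h dd.
Proof.
by have -> : coords Dg Bs = flatten L by []; rewrite size_flatten shape_L.
Qed.

End CoordsK.

Lemma map_vgen (K : fieldType) (N : nat) (c : seq K) : size c = N ->
  map (meval (fun i : 'I_N => nth 0 c i)) [seq ('X_i : {mpoly K[N]}) | i <- enum 'I_N] = c.
Proof.
move=> hc; rewrite -map_comp (eq_map (g := nth 0 c \o val)); last first.
  by move=> i /=; rewrite mevalXU.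
by rewrite map_comp val_enum_ord -hc -/(mkseq _ _) mkseq_nth.
Qed.

Section Main.
Variables (K : fieldType) (nv : nat).
Local Notation P := {mpoly K[nv]}.

Lemma exists_bases (I : P -> Prop) : (forall a, exists B, basis_deg I a B) ->
  forall D, exists Bs, bases_degs I D Bs.
Proof.
move=> hI; elim=> [|a D [Bs [hs hb]]]; first by exists [::]; split.
have [B hB] := hI a; exists (B :: Bs); split; first by rewrite /= hs.
by move=> [|j] //= hj; apply: hb.
Qed.

Lemma free_basis d (B : seq P) : row_free (MG d B) -> (forall p, p \in B -> p \is d.-homog) ->
  forall c : 'I_(size B) -> K, \sum_(i < size B) c i *: B`_i = 0 -> forall i, c i = 0.
Proof.
move=> hfree hB c hc i.
have h0 : (\row_j c j) *m MG d B = 0.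
  rewrite mul_MG (eq_bigr (fun j => c j *: B`_j)) ?hc ?vec0 //.
  by move=> j _; rewrite mxE.
have := row_free_inj hfree (etrans h0 (esym (mul0mx _ _))).
by move/rowP => /(_ i); rewrite !mxE.
Qed.

Lemma hilb_size (I : P -> Prop) h a B : hilbfun I h -> basis_deg I a B ->
  size B = sz nv h a.
Proof.
move=> hh hB; rewrite /sz; have := hh (Posz a) => /= [[B' [hB' ->]]].
by rewrite (basis_size hB hB') opprB addrC subrK.
Qed.

Variables (r : nat) (h : int -> int) (E : nat) (I0 : P -> Prop) (k dd : nat).
Hypothesis hE : h (Posz E) = r%:Z.
Hypothesis hSlip : Slip h r I0.
Hypothesis hk : (1 <= k)%N.
Hypothesis hdd : (k * E + k <= dd)%N.

Lemma bases_nth (I : P -> Prop) Bs : bases_degs I (Dg dd) Bs ->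
  forall a, (a <= dd)%N -> basis_deg I a (nth [::] Bs a).
Proof.
move=> [_ hb] a ha; have := hb a; rewrite /Dg size_iota ltnS nth_iota // add0n.
by move/(_ ha).
Qed.

Lemma row_MatR g (Bs : seq (seq P)) i :
  row i (MatR dd k g Bs) = vec dd ((genK dd k Bs)`_i).
Proof. by apply/rowP => j; rewrite !mxE. Qed.

Lemma MatR_in (I : P -> Prop) g Bs : is_homog_ideal I -> bases_degs I (Dg dd) Bs ->
  forall i, ideal_pow I k (pol dd (row i (MatR dd k g Bs))).
Proof.
move=> hI hBs i; rewrite row_MatR.
have hbs := bases_nth hBs.
have [hlt|hge] := ltnP i (size (genK dd k Bs)).
  have hm : (genK dd k Bs)`_i \in genK dd k Bs by rewrite mem_nth.
  rewrite vecK; first exact: (@gen_in K nv I (fun a => nth [::] Bs a) dd hbs k dd _ (leqnn dd) hm).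
  exact: (@gen_homog K nv I (fun a => nth [::] Bs a) dd hbs k dd _ (leqnn dd) hm).
rewrite nth_default // vec0.
have -> : pol dd (0 : 'rV[K]_(dimS nv dd)) = 0.
  by rewrite /pol big1 // => j _; rewrite mxE scale0r.
by case: (ideal_pow_ideal k hI.1).
Qed.

Lemma rank_mxsub m n p (f1 : 'I_p -> 'I_m) (f2 : 'I_p -> 'I_n) (X : 'M[K]_(m, n)) :
  (\rank (mxsub f1 f2 X) <= \rank X)%N.
Proof.
have -> : mxsub f1 f2 X = (mxsub f2 id (mxsub f1 id X)^T)^T.
  by apply/matrixP => i j; rewrite !mxE.
rewrite mxrank_tr rowsubE; apply: leq_trans (mxrankM_maxr _ _) _.
by rewrite mxrank_tr rowsubE mxrankM_maxr.
Qed.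

Lemma main_rank : exists Bs0, bases_degs I0 (Dg dd) Bs0 /\
  (\rank (MG dd (genK dd k Bs0)) + r * dimS nv k.-1 <= dimS nv dd)%N.
Proof.
case: hSlip => [[hI0 hh0] hcl].
have [Bs0 hBs0] : exists Bs0, bases_degs I0 (Dg dd) Bs0.
  apply: exists_bases => a; have := hh0 (Posz a) => /= [[B [hB _]]].
  by exists B.
exists Bs0; split => //.
set G0 := genK dd k Bs0; set g := size G0; set M0 := MG dd G0.
rewrite leqNgt; apply/negP => hlt.
set rho := \rank M0.
pose f1 := maxrankfun M0.
have hfree1 : row_free (mxsub f1 id M0) := maxrowsub_free M0.
have hfull : row_full (mxsub f1 id M0)^T.
  by rewrite /row_full mxrank_tr; exact: hfree1.
pose f2 := fullrankfun hfull.
have hS : \rank (mxsub f2 id (mxsub f1 id M0)^T) = rho := mxrank_fullrowsub hfull.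
have hSq : mxsub f1 f2 M0 = (mxsub f2 id (mxsub f1 id M0)^T)^T.
  by apply/matrixP => i j; rewrite !mxE.
have hdet0 : \det (mxsub f1 f2 M0) != 0.
  rewrite hSq det_tr -unitfE -unitmxE -row_free_unit.
  by rewrite /row_free hS.
pose N := Ntot nv h dd.
pose vg := [seq ('X_i : {mpoly K[N]}) | i <- enum 'I_N].
pose Mg := MatR dd k g (unflat nv h dd vg).
pose F := \det (mxsub f1 f2 Mg).
have hev : forall (I : P -> Prop) Bs, in_Hilb h I -> bases_degs I (Dg dd) Bs ->
    F.@[coordv (N := N) (Dg dd) Bs] = \det (mxsub f1 f2 (MatR dd k g Bs)).
  move=> I Bs [hI hh] hBs.
  have hsz : forall a, (a <= dd)%N -> size (nth [::] Bs a) = sz nv h a.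
    by move=> a ha; apply: (hilb_size hh); apply: bases_nth.
  rewrite /F -det_map_mx map_mxsub /Mg MatR_map unflat_map.
  by rewrite map_vgen ?(size_coords hBs hsz) // (unflat_coords hBs hsz).
have := hcl (Dg dd) N F.
have hJ : forall J : P -> Prop, Sip h r J -> basic_closed (Dg dd) F J.
  move=> J hJ Bs hBs; rewrite (hev J Bs hJ.1 hBs).
  have hrk := Sip_rank (M := MatR dd k g Bs) hJ hE hk (leq_trans (leq_add (leqnn _) (leq_pred k)) hdd)
               (MatR_in hJ.1.1 hBs).
  apply/eqP; apply: contraTT hrk => hdet; rewrite -ltnNge.
  have hu : mxsub f1 f2 (MatR dd k g Bs) \in unitmx by rewrite unitmxE unitfE.
  move: hu; rewrite -row_free_unit /row_free => /eqP hr.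
  have := rank_mxsub f1 f2 (MatR dd k g Bs); rewrite hr => hle.
  by apply: leq_trans hlt _; rewrite leq_add2r.
move=> /(_ hJ Bs0 hBs0); rewrite (hev I0 Bs0 (conj hI0 hh0) hBs0).
have -> : MatR dd k g Bs0 = M0 by apply/matrixP => i j; rewrite !mxE.
by move/eqP; rewrite (negbTE hdet0).
Qed.

End Main.

Section Final.
Variables (K : fieldType) (nv : nat).
Local Notation P := {mpoly K[nv]}.
Variables (r : nat) (h : int -> int) (E : nat) (I0 : P -> Prop) (k dd : nat).
Hypothesis hE : h (Posz E) = r%:Z.
Hypothesis hSlip : Slip h r I0.
Hypothesis hk : (1 <= k)%N.
Hypothesis hdd : (k * E + k <= dd)%N.

Lemma main_basis : exists B : seq P,
  basis_deg (ideal_pow I0 k) dd B /\ (size B + r * dimS nv k.-1 <= dimS nv dd)%N.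
Proof.
have [Bs0 [hBs0 hrk]] := main_rank hE hSlip hk hdd.
have [[hI0 _] _] := hSlip.
have hbs := bases_nth hBs0.
set G0 := genK dd k Bs0 in hrk; set M0 := MG dd G0 in hrk.
have hG0h : forall g, g \in G0 -> g \is dd.-homog.
  by move=> g hg; apply: (@gen_homog K nv I0 (fun a => nth [::] Bs0 a) dd hbs k dd _ (leqnn dd) hg).
have hG0i : forall g, g \in G0 -> ideal_pow I0 k g.
  by move=> g hg; apply: (@gen_in K nv I0 (fun a => nth [::] Bs0 a) dd hbs k dd _ (leqnn dd) hg).
set rho := \rank M0 in hrk.
set RB := row_base M0.
pose B := [seq pol dd (row i RB) | i <- enum 'I_rho].
have hsB : size B = rho by rewrite size_map size_enum_ord.
have hBmem : forall p, p \in B -> ideal_pow I0 k p /\ p \is dd.-homog.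
  move=> p /mapP [i _ ->]; split; last exact: pol_homog.
  have : (row i RB <= M0)%MS.
    by apply: submx_trans (row_sub i _) _; rewrite eq_row_base.
  move=> /submxP [u ->]; rewrite mul_MG vecK; last exact: homog_comb.
  by apply: ideal_pow_comb; [exact: hI0.1 | exact: hG0i].
have hBvec : forall i : 'I_rho, vec dd B`_i = row i RB.
  by move=> i; rewrite (nth_map i) ?size_enum_ord // nth_ord_enum polK.
have hBh : forall p, p \in B -> p \is dd.-homog by move=> p /hBmem [].
have hEq : (MG dd B == RB)%MS.
  apply/andP; split.
    apply/row_subP => j; rewrite row_MG.
    have : B`_j \in B by rewrite mem_nth.
    move=> /mapP [i _ ->]; rewrite polK; exact: row_sub.
  apply/row_subP => i; rewrite -hBvec.
  have hi : B`_i \in B by rewrite mem_nth // hsB.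
  apply (proj1 (inspan_submx hBh (hBh _ hi))); exact: inspan_mem hi.
have hfree : row_free (MG dd B).
  by rewrite /row_free (eqmx_rank hEq) hsB; apply: row_base_free.
exists B; split; last by rewrite hsB.
split => //.
- exact: free_basis hfree hBh.
- move=> p hp hph.
  have hsp := @gen_span K nv I0 (fun a => nth [::] Bs0 a) dd hI0 hbs k p dd hp (leqnn dd).
  rewrite pihomog_dE // in hsp.
  apply (proj2 (inspan_submx hBh hph)).
  apply: submx_trans (proj1 (inspan_submx hG0h hph) hsp) _.
  by rewrite -(eq_row_base M0); move/andP: hEq => [_ ->].
Qed.

End Final.

Unset Implicit Arguments. Set Strict Implicit.

Theorem theorem1p1 (K : closedFieldType) (n r : nat) (h : int -> int) (e : int)
    (I0 : {mpoly K[n.+1]} -> Prop) :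
  (1 <= n)%N -> (1 <= r)%N ->
  (exists I : {mpoly K[n.+1]} -> Prop,
      [/\ is_homog_ideal I, saturated I, hilbfun I h
        & exists a0 : int, forall a, a0 <= a -> h a = r%:Z]) ->
  h e = r%:Z -> (forall a : int, h a = r%:Z -> e <= a) ->
  Slip h r I0 ->
  forall (k : nat) (d : int), (1 <= k)%N -> k%:Z * e + k%:Z <= d ->
    exists B : seq {mpoly K[n.+1]},
      basis_deg (ideal_pow I0 k) `|d|%N B /\
      (size B + r * dimS n.+1 k.-1 <= dimS n.+1 `|d|%N)%N.
Proof.
move=> _ hr _ he _ hSlip k d hk hkd.
have hh := hSlip.1.2.
case: e he hkd => [E|E'] he hkd; last first.
  by have := hh (Negz E'); rewrite /= he => /eqP; rewrite eqz_nat => /eqP hr0; rewrite hr0 in hr.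
case: d hkd => [dd|dn] hkd; last first.
  by move: hkd; rewrite -PoszM -PoszD.
move: hkd; rewrite -PoszM -PoszD lez_nat => hkd.
exact: (main_basis he hSlip hk hkd).
Qed.
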